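(* The DODOSP restricted to instances with $r_l^d=0$ and $r_u^d=N$ for each day $d$ can be decided in time polynomial in $D$.
   Context: An instance of the Days On Days Off Scheduling Problem (DODOSP) consists of integers $D\ge 1$ (days), $N\ge 1$ (workers), bounds $l_w,u_w,l_o,u_o,U_w,U_o\in\mathbb{N}$, and for each day $d\in\{1,\dots,D\}$ integers $0\le r_l^d\le r_u^d\le N$. A schedule is a map $f:\{n_1,\dots,n_N\}\times\{1,\dots,D\}\to\{\mathrm{ON},\mathrm{OFF}\}$ (not cyclic). A work period (resp. off period) of a worker is an inclusion-wise maximal set of consecutive days on which the worker is ON (resp. OFF). A schedule is feasible if on every day $d$ the number of workers that are ON lies in $[r_l^d,r_u^d]$, every work period has length between $l_w$ and $u_w$, every off period has length between $l_o$ and $u_o$, every worker is ON on at most $U_w$ days and OFF on at most $U_o$ days. The decision problem asks whether a feasible schedule exists. *)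

(* Defs.v *)
From mathcomp Require Import all_boot.
Set Implicit Arguments. Unset Strict Implicit. Unset Printing Implicit Defensive.

(* Days are indexed 0 .. D-1 (day d of the paper is index d-1), workers *)
(* 0 .. N-1.  A schedule is  f : nat -> nat -> bool  where  f n d = true *)
(* means worker n is ON on day d; only n < N, d < D matter.              *)

Definition is_period (D : nat) (s : nat -> bool) (b : bool) (i j : nat) : Prop :=
  [/\ i < j <= D,
      (forall d, i <= d < j -> s d = b),
      (i = 0 \/ s i.-1 <> b)
    & (j = D \/ s j <> b)].

(* Feasibility of a DODOSP instance; rl d / ru d are the bounds r_l^{d+1}, r_u^{d+1}. *)
Definition dodosp_feasible (D N lw uw lo uo Uw Uo : nat) (rl ru : nat -> nat) : Prop :=
  exists f : nat -> nat -> bool,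
    [/\ (forall d, d < D -> rl d <= \sum_(n < N) (f n d : nat) <= ru d),
        (forall n i j, n < N -> is_period D (f n) true i j -> lw <= j - i <= uw),
        (forall n i j, n < N -> is_period D (f n) false i j -> lo <= j - i <= uo),
        (forall n, n < N -> \sum_(d < D) (f n d : nat) <= Uw)
      & (forall n, n < N -> \sum_(d < D) (~~ f n d : nat) <= Uo)].

(* Model of computation: a unit-cost register machine (RAM without      *)
(* indirect addressing) over unbounded naturals; each executed           *)
(* instruction costs one step.                                           *)

Inductive instr :=
| IConst of nat & nat
| IAdd of nat & nat & nat
| ISub of nat & nat & nat      (* ISub r a b   : R[r] := R[a] - R[b] (trunc.)  *)
| IJle of nat & nat & nat
| IHalt.

Definition program := seq instr.

Record config := Config { pc : nat; regs : nat -> nat }.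

Definition upd (R : nat -> nat) (r v : nat) : nat -> nat :=
  fun x => if x == r then v else R x.

(* One step; None means the machine has halted (IHalt, or pc out of range). *)
Definition step (P : program) (c : config) : option config :=
  let R := regs c in
  match nth IHalt P (pc c) with
  | IConst r v => Some (Config (pc c).+1 (upd R r v))
  | IAdd r a b => Some (Config (pc c).+1 (upd R r (R a + R b)))
  | ISub r a b => Some (Config (pc c).+1 (upd R r (R a - R b)))
  | IJle a b l => Some (Config (if R a <= R b then l else (pc c).+1) R)
  | IHalt => None
  end.

(* exec P t c = Some c' iff the machine started in c halts after at most
   t steps, in the halted configuration c'. *)
Fixpoint exec (P : program) (t : nat) (c : config) : option config :=
  match step P c with
  | None => Some c
  | Some c' => match t with 0 => None | t'.+1 => exec P t' c' end
  end.

Definition init (input : seq nat) : config := Config 0 (fun r => nth 0 input r).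

(* Main.v *)
Require Import Defs.
From mathcomp Require Import all_boot zify.
Set Implicit Arguments. Unset Strict Implicit.

Definition lwp x := x + (1 - x).

Section Math.
Variables lw uw lo uo : nat.

Inductive reach : bool -> nat -> nat -> nat -> nat -> Prop :=
| r_nil b : reach b 0 0 0 0
| r_w a o W O L : reach false a o W O -> lwp lw <= L <= uw -> reach true a.+1 o (W + L) O
| r_o a o W O L : reach true a o W O -> lwp lo <= L <= uo -> reach false a o.+1 W (O + L).

Lemma reach_bounds b a o W O : reach b a o W O ->
  a * lwp lw <= W <= a * uw /\ o * lwp lo <= O <= o * uo /\
  (if b then a = o.+1 \/ a = o else o = a.+1 \/ o = a).
Proof.
elim=> [b0|a0 o0 W0 O0 L _ [h1 [h2 h3]] hL|a0 o0 W0 O0 L _ [h1 [h2 h3]] hL].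
- by rewrite !mul0n; case: b0; lia.
- rewrite !mulSnr; lia.
- rewrite !mulSnr; lia.
Qed.

Lemma split_sum k l u W : k.+1 * l <= W <= k.+1 * u ->
  exists W1 L, [/\ W = W1 + L, k * l <= W1 <= k * u & l <= L <= u].
Proof.
move=> /andP[h1 h2].
have hlu : l <= u by rewrite -(leq_pmul2l (ltn0Sn k)); apply: leq_trans h2.
have hk := leq_mul (leqnn k) hlu.
move: h1 h2; rewrite !mulSnr => h1 h2.
exists (W - minn u (W - k * l)), (minn u (W - k * l)); split; lia.
Qed.

Lemma reach_of_bounds n : forall b a o W O, a + o <= n ->
  (if b then a = o.+1 \/ a = o else o = a.+1 \/ o = a) ->
  a * lwp lw <= W <= a * uw -> o * lwp lo <= O <= o * uo -> reach b a o W O.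
Proof.
elim: n => [|n IH] [] a o W O hn hr hW hO.
- have [? ?] : a = 0 /\ o = 0 by lia. subst.
  have [? ?] : W = 0 /\ O = 0 by lia. subst; exact: r_nil.
- have [? ?] : a = 0 /\ o = 0 by lia. subst.
  have [? ?] : W = 0 /\ O = 0 by lia. subst; exact: r_nil.
- case: a hn hr hW => [|a] hn hr hW.
  + have ? : o = 0 by lia. subst.
    have [? ?] : W = 0 /\ O = 0 by lia. subst; exact: r_nil.
  + have [W1 [L [-> h1 h2]]] := split_sum hW.
    apply: r_w => //. apply: IH => //; lia.
- case: o hn hr hO => [|o] hn hr hO.
  + have ? : a = 0 by lia. subst.
    have [? ?] : W = 0 /\ O = 0 by lia. subst; exact: r_nil.
  + have [O1 [L [-> h1 h2]]] := split_sum hO.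
    apply: r_o => //. apply: IH => //; lia.
Qed.

Lemma sum_split (F : nat -> nat) i p : i <= p ->
  \sum_(d < p) F d = \sum_(d < i) F d + \sum_(i <= d < p) F d.
Proof. move=> h. rewrite -(big_mkord xpredT) -(big_mkord xpredT F).
 by rewrite (big_cat_nat (leq0n i) h). Qed.

Lemma sum_const_range (F : nat -> nat) i p x : (forall d, i <= d < p -> F d = x) ->
  \sum_(i <= d < p) F d = (p - i) * x.
Proof. by move=> h; rewrite (eq_big_nat _ _ h) sum_nat_const_nat. Qed.

Fixpoint start (s : nat -> bool) (c : bool) (n : nat) : nat :=
  if n is n'.+1 then (if s n' == c then start s c n' else n) else 0.

Lemma start_le s c n : start s c n <= n.
Proof. elim: n => //= n IH; case: ifP => // _; exact: leqW. Qed.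

Lemma start_const s c n d : start s c n <= d < n -> s d = c.
Proof.
elim: n => [|n IH] /=; first by lia.
case: ifP => [/eqP Hn|_] hd; last by lia.
have [->//|hdn] := eqVneq d n. apply: IH. have := start_le s c n. lia.
Qed.

Lemma start_left s c n : start s c n = 0 \/ s (start s c n).-1 != c.
Proof. elim: n => [|n IH] /=; first by left. case: ifP => // /negbT h; by right. Qed.

Lemma ext_period s p L b' c i j : 0 < L -> (p = 0 \/ s p.-1 != b') ->
  is_period (p + L) (fun d => if d < p then s d else b') c i j ->
  is_period p s c i j \/ [/\ c = b', i = p & j = p + L].
Proof.
move=> hL hp [/andP[hij hjD] hc hl hr].
case: (leqP j p) => hjp.
- left; split.
  + by rewrite hij hjp.
  + move=> d hd; have := hc d hd; rewrite ifT //; lia.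
  + case: hl => [->|h]; [by left|right]; move: h; rewrite ifT //; lia.
  + case: hr => [h|]; first by lia.
    case: (ltnP j p) => hj h; [by right|left; lia].
- have cb : c = b'.
    have := hc j.-1; rewrite ifF; last by lia. by move=> ->; lia.
  have hip : p <= i.
    case: (leqP p i) => // hi.
    have := hc p.-1; rewrite ifT; last by lia.
    move=> h; case: hp => hp; first by lia.
    by move: hp; rewrite h ?cb ?eqxx //; lia.
  right; split => //.
  + case: hl => [h|]; first by lia.
    case: (eqVneq i p) => // /eqP hne. rewrite ifF; last by lia. by rewrite cb.
  + case: hr => // . rewrite ifF; last by lia.
    case: (eqVneq j (p + L)) => // /eqP hne; rewrite cb. lia.
Qed.

Lemma prefix_reach s D :
  (forall i j, is_period D s true i j -> lw <= j - i <= uw) ->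
  (forall i j, is_period D s false i j -> lo <= j - i <= uo) ->
  forall p, p <= D -> (p = 0 \/ p = D \/ s p != s p.-1) ->
  exists b a o, (p = 0 \/ s p.-1 = b) /\ reach b a o (\sum_(d<p) s d) (\sum_(d<p) ~~ s d).
Proof.
move=> Ht Hf p. elim/ltn_ind: p => p IH hpD hb.
case: p IH hpD hb => [|p] IH hpD hb.
  exists true, 0, 0; split; first by left. rewrite !big_ord0; exact: r_nil.
move Hc: (s p) => c.
have hip : start s c p.+1 < p.+1.
  rewrite /= Hc eqxx. have := start_le s c p. lia.
move: hip; move Hi: (start s c p.+1) => i hip.
have hconst : forall d, i <= d < p.+1 -> s d = c by rewrite -Hi; apply: start_const.
have hleft : i = 0 \/ s i.-1 != c by rewrite -Hi; apply: start_left.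
have hper : is_period D s c i p.+1.
  split.
  - by rewrite hip hpD.
  - exact: hconst.
  - by case: hleft => h; [left|right; apply/eqP].
  - case: hb => [//|[h|h]]; [by left|right; apply/eqP]; by rewrite -Hc.
have hsi : s i = c by apply: hconst; rewrite leqnn hip.
have [b0 [a [o [hb0 hr]]]] := IH i hip (leq_trans (ltnW hip) hpD)
  (ltac:(case: hleft => h; [by left|right; right; by rewrite hsi eq_sym])).
have [a' [o' hr']] : exists a o, reach (~~c) a o (\sum_(d<i) s d) (\sum_(d<i) ~~ s d).
  case: (posnP i) => [i0|ipos].
    rewrite i0 !big_ord0; exists 0, 0; exact: r_nil.
  exists a, o.
  have <- : b0 = ~~ c.
    case: hb0 => [h|h]; first by lia.
    case: hleft => [h'|]; first by lia.
    by rewrite h; case: (b0); case: (c).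
  done.
have hip' := ltnW hip.
rewrite (sum_split (fun d => nat_of_bool (s d)) hip') (sum_split (fun d => nat_of_bool (~~ s d)) hip').
rewrite (@sum_const_range (fun d => nat_of_bool (s d)) i p.+1 c); last by move=> d /hconst ->.
rewrite (@sum_const_range (fun d => nat_of_bool (~~ s d)) i p.+1 (~~ c)); last by move=> d /hconst ->.
clear Hi.
case: c Hc hconst hleft hper hsi hr' => Hc hconst hleft hper hsi hr'.
- exists true, a'.+1, o'; split; first by right.
  rewrite /= muln1 muln0 addn0. apply: r_w => //.
  have := Ht _ _ hper. rewrite /lwp. lia.
- exists false, a', o'.+1; split; first by right.
  rewrite /= muln1 muln0 addn0. apply: r_o => //.
  have := Hf _ _ hper. rewrite /lwp. lia.
Qed.

Lemma reach_sched b a o W O : reach b a o W O -> exists s : nat -> bool,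
  [/\ (W + O = 0 \/ s (W + O).-1 = b),
   (forall i j, is_period (W + O) s true i j -> lwp lw <= j - i <= uw),
   (forall i j, is_period (W + O) s false i j -> lwp lo <= j - i <= uo),
   \sum_(d < W + O) s d = W & \sum_(d < W + O) ~~ s d = O].
Proof.
elim => [b0|a0 o0 W0 O0 L _ [s [h1 h2 h3 h4 h5]] hL|a0 o0 W0 O0 L _ [s [h1 h2 h3 h4 h5]] hL].
- exists (fun _ => b0); split; first by left.
  + by move=> i j [/andP[? ?]]; lia.
  + by move=> i j [/andP[? ?]]; lia.
  + by rewrite big_ord0.
  + by rewrite big_ord0.
- move: h1 h2 h3 h4 h5; move Hp: (W0 + O0) => p h1 h2 h3 h4 h5.
  have -> : W0 + L + O0 = p + L by lia.
  exists (fun d => if d < p then s d else true).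
  have hL0 : 0 < L by move: hL; rewrite /lwp; lia.
  have hp : p = 0 \/ s p.-1 != true by case: h1 => [->|->]; [left|right].
  have hpl : p <= p + L by lia.
  split.
  + right. rewrite ifF //; lia.
  + move=> i j /(ext_period hL0 hp) [h|[_ -> ->]]; first exact: h2 i j h.
    lia.
  + by move=> i j /(ext_period hL0 hp) [h|[//]]; apply: h3.
  + rewrite (sum_split (fun d => nat_of_bool (if d < p then s d else true)) hpl).
    rewrite (@sum_const_range _ p (p + L) true); last by move=> d /andP[hd _]; rewrite ltnNge hd.
    rewrite (eq_bigr (fun d : 'I_p => nat_of_bool (s d))); last by move=> d _; rewrite ltn_ord.
    rewrite h4 /=. lia.
  + rewrite (sum_split (fun d => nat_of_bool (~~ if d < p then s d else true)) hpl).
    rewrite (@sum_const_range _ p (p + L) false); last by move=> d /andP[hd _]; rewrite ltnNge hd.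
    rewrite (eq_bigr (fun d : 'I_p => nat_of_bool (~~ s d))); last by move=> d _; rewrite ltn_ord.
    rewrite h5 /=. lia.
- move: h1 h2 h3 h4 h5; move Hp: (W0 + O0) => p h1 h2 h3 h4 h5.
  have -> : W0 + (O0 + L) = p + L by lia.
  exists (fun d => if d < p then s d else false).
  have hL0 : 0 < L by move: hL; rewrite /lwp; lia.
  have hp : p = 0 \/ s p.-1 != false by case: h1 => [->|->]; [left|right].
  have hpl : p <= p + L by lia.
  split.
  + right. rewrite ifF //; lia.
  + by move=> i j /(ext_period hL0 hp) [h|[//]]; apply: h2.
  + move=> i j /(ext_period hL0 hp) [h|[_ -> ->]]; first exact: h3 i j h.
    lia.
  + rewrite (sum_split (fun d => nat_of_bool (if d < p then s d else false)) hpl).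
    rewrite (@sum_const_range _ p (p + L) false); last by move=> d /andP[hd _]; rewrite ltnNge hd.
    rewrite (eq_bigr (fun d : 'I_p => nat_of_bool (s d))); last by move=> d _; rewrite ltn_ord.
    rewrite h4 /=. lia.
  + rewrite (sum_split (fun d => nat_of_bool (~~ if d < p then s d else false)) hpl).
    rewrite (@sum_const_range _ p (p + L) true); last by move=> d /andP[hd _]; rewrite ltnNge hd.
    rewrite (eq_bigr (fun d : 'I_p => nat_of_bool (~~ s d))); last by move=> d _; rewrite ltn_ord.
    rewrite h5 /=. lia.
Qed.

End Math.

Lemma sum1 n : \sum_(i < n) 1 = n.
Proof. by rewrite big_const_ord iter_addn_0 mul1n. Qed.

Lemma feas_iff D N lw uw lo uo Uw Uo : 0 < N ->
 dodosp_feasible D N lw uw lo uo Uw Uo (fun _ => 0) (fun _ => N) <->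
 exists b a o W O, [/\ reach lw uw lo uo b a o W O, W + O = D, W <= Uw & O <= Uo].
Proof.
move=> HN; split.
- case=> f [h1 h2 h3 h4 h5].
  have [b [a [o [_ hr]]]] := @prefix_reach lw uw lo uo (f 0) D
    (fun i j h => h2 0 i j HN h) (fun i j h => h3 0 i j HN h) D (leqnn D)
    (or_intror (or_introl erefl)).
  exists b, a, o, (\sum_(d < D) f 0 d), (\sum_(d < D) ~~ f 0 d); split => //.
  + rewrite -big_split /= (eq_bigr (fun _ => 1)); last by move=> d _; case: (f 0 d).
    exact: sum1.
  + exact: h4.
  + exact: h5.
- case=> b [a [o [W [O [hr hWO hW hO]]]]].
  have [s [_ h2 h3 h4 h5]] := reach_sched hr.
  subst D.
  exists (fun _ => s); split.
  + move=> d _; rewrite leq0n /=.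
    rewrite -[X in _ <= X]sum1; apply: leq_sum => i _; exact: leq_b1.
  + by move=> n i j _ /h2; rewrite /lwp; lia.
  + by move=> n i j _ /h3; rewrite /lwp; lia.
  + by move=> n _; rewrite h4.
  + by move=> n _; rewrite h5.
Qed.

Definition chkE D Uw Uo xl xh pl ph :=
  (((((((((xl - xh) + (xl - Uw)) + (pl - ph)) + (pl - Uo)) + ((xl + pl) - D))
   + (D - (xh + ph))) + (D - (xh + Uo))) + (D - (Uw + ph))) + (D - (Uw + Uo))).

Lemma chk_ok D Uw Uo xl xh pl ph : (1 - chkE D Uw Uo xl xh pl ph != 0) <->
  exists W O, [/\ W + O = D, xl <= W <= xh, W <= Uw, pl <= O <= ph & O <= Uo].
Proof.
have -> : (1 - chkE D Uw Uo xl xh pl ph != 0) = (chkE D Uw Uo xl xh pl ph == 0).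
  by case: (chkE _ _ _ _ _ _ _) => [|[|n]].
rewrite /chkE !addn_eq0 !subn_eq0. split.
- move=> H.
  repeat match goal with H : is_true (_ && _) |- _ => case/andP: H => H ? end.
  exists (maxn xl (D - minn ph Uo)), (D - maxn xl (D - minn ph Uo)); split; lia.
- case=> W [O [? ? ? ? ?]].
  by repeat (apply/andP; split); lia.
Qed.

Definition inc D Uw Uo lp up lq uq a :=
  ((1 - chkE D Uw Uo (a * lp) (a * up) (a * lq) (a * uq))
 + (1 - chkE D Uw Uo (a * lp + lp) (a * up + up) (a * lq) (a * uq)))
 + (1 - chkE D Uw Uo (a * lp) (a * up) (a * lq + lq) (a * uq + uq)).

Lemma or3_nz x y z : (x + y) + z != 0 -> [\/ x != 0, y != 0 | z != 0].
Proof. case: x => [|x]; case: y => [|y]; case: z => [|z] //= _; by [constructor 1|constructor 2|constructor 3]. Qed.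

Lemma arith_iff D lw uw lo uo Uw Uo :
  (exists b a o W O, [/\ reach lw uw lo uo b a o W O, W + O = D, W <= Uw & O <= Uo]) <->
  exists a, a < D.+1 /\ inc D Uw Uo (lwp lw) uw (lwp lo) uo a != 0.
Proof.
have lp0 : 0 < lwp lw by rewrite /lwp; lia.
have lq0 : 0 < lwp lo by rewrite /lwp; lia.
split.
- case=> b [a [o [W [O [hr hWO hW hO]]]]].
  have [hb1 [hb2 hb3]] := reach_bounds hr.
  have ha := leq_pmulr a lp0. have ho := leq_pmulr o lq0.
  case: b hr hb3 => hr [] ?; subst.
  + exists o; split; first lia.
    have := proj2 (chk_ok (o.+1 + o) Uw Uo (o * lwp lw + lwp lw) (o * uw + uw) (o * lwp lo) (o * uo)).
    rewrite /inc -!mulSnr. move=> H; have := H (ex_intro _ W (ex_intro _ O _)).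
    move=> {}H. have : 1 - chkE (W + O) Uw Uo (o.+1 * lwp lw) (o.+1 * uw) (o * lwp lo) (o * uo) != 0.
      apply/chk_ok; exists W, O; split => //; lia.
    lia.
  + exists o; split; first lia.
    have : 1 - chkE (W + O) Uw Uo (o * lwp lw) (o * uw) (o * lwp lo) (o * uo) != 0.
      apply/chk_ok; exists W, O; split => //; lia.
    rewrite /inc; lia.
  + exists a; split; first lia.
    have : 1 - chkE (W + O) Uw Uo (a * lwp lw) (a * uw) (a.+1 * lwp lo) (a.+1 * uo) != 0.
      apply/chk_ok; exists W, O; split => //; lia.
    rewrite /inc -!mulSnr; lia.
  + exists a; split; first lia.
    have : 1 - chkE (W + O) Uw Uo (a * lwp lw) (a * uw) (a * lwp lo) (a * uo) != 0.
      apply/chk_ok; exists W, O; split => //; lia.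
    rewrite /inc; lia.
- case=> a [_ H].
  have : [\/ 1 - chkE D Uw Uo (a * lwp lw) (a * uw) (a * lwp lo) (a * uo) != 0,
     1 - chkE D Uw Uo (a.+1 * lwp lw) (a.+1 * uw) (a * lwp lo) (a * uo) != 0 |
     1 - chkE D Uw Uo (a * lwp lw) (a * uw) (a.+1 * lwp lo) (a.+1 * uo) != 0].
    move: H; rewrite /inc !mulSnr.
    exact: or3_nz.
  case=> /chk_ok [W [O [hWO h1 h2 h3 h4]]].
  + exists true, a, a, W, O; split => //. by apply: (@reach_of_bounds _ _ _ _ (a + a)) => //; right.
  + exists true, a.+1, a, W, O; split => //. by apply: (@reach_of_bounds _ _ _ _ (a.+1 + a)) => //; left.
  + exists false, a, a.+1, W, O; split => //. by apply: (@reach_of_bounds _ _ _ _ (a + a.+1)) => //; left.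
Qed.

Fixpoint run (P : program) (n : nat) (c : config) : option config :=
  match n with 0 => Some c | n'.+1 =>
    match step P c with Some c' => run P n' c' | None => None end end.

Lemma run_exec P n c c' t : run P n c = Some c' -> exec P (n + t) c = exec P t c'.
Proof.
elim: n c => [|n IH] c /=; first by case=> ->.
case E: (step P c) => [c1|] // H. exact: IH.
Qed.

Lemma exec_mono P t c cf : exec P t c = Some cf -> forall u, t <= u -> exec P u c = Some cf.
Proof.
elim: t c => [|t IH] c /=; case E: (step P c) => [c1|] //.
- by move=> H [|u] _ /=; rewrite E.
- by move=> H [|u] //= Hu; rewrite E; apply: IH.
- by move=> H [|u] _ /=; rewrite E.
Qed.

Definition chk (xl xh pl ph : nat) : seq instr := [::
 ISub 22 xl xh;
 ISub 21 xl 6; IAdd 22 22 21;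
 ISub 21 pl ph; IAdd 22 22 21;
 ISub 21 pl 7; IAdd 22 22 21;
 IAdd 23 xl pl; ISub 21 23 0; IAdd 22 22 21;
 IAdd 23 xh ph; ISub 21 0 23; IAdd 22 22 21;
 IAdd 23 xh 7; ISub 21 0 23; IAdd 22 22 21;
 IAdd 23 6 ph; ISub 21 0 23; IAdd 22 22 21;
 IAdd 23 6 7; ISub 21 0 23; IAdd 22 22 21;
 ISub 21 8 22; IAdd 16 16 21].

Definition prog : program :=
  [:: IConst 8 1; ISub 9 8 2; IAdd 9 2 9; ISub 10 8 4; IAdd 10 4 10;
      IConst 11 0; IConst 12 0; IConst 13 0; IConst 14 0; IConst 15 0; IConst 16 0;
      IJle 11 0 14; IAdd 0 16 16; IHalt;
      IAdd 17 12 9; IAdd 18 13 3; IAdd 19 14 10; IAdd 20 15 5]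
  ++ chk 12 13 14 15 ++ chk 17 18 14 15 ++ chk 12 13 19 20 ++
  [:: IAdd 12 12 9; IAdd 13 13 3; IAdd 14 14 10; IAdd 15 15 5; IAdd 11 11 8;
      IConst 24 0; IJle 24 24 11].

Lemma body_run R : exists R',
  run prog 83 (Config 14 R) = Some (Config 11 R') /\
  R' 0 = R 0 /\ R' 2 = R 2 /\ R' 3 = R 3 /\ R' 4 = R 4 /\ R' 5 = R 5 /\ R' 6 = R 6 /\ R' 7 = R 7 /\
  R' 8 = R 8 /\ R' 9 = R 9 /\ R' 10 = R 10 /\ R' 11 = R 11 + R 8 /\ R' 12 = R 12 + R 9 /\
      R' 13 = R 13 + R 3 /\ R' 14 = R 14 + R 10 /\ R' 15 = R 15 + R 5 /\
      R' 16 = R 16 + (R 8 - chkE (R 0) (R 6) (R 7) (R 12) (R 13) (R 14) (R 15))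
        + (R 8 - chkE (R 0) (R 6) (R 7) (R 12 + R 9) (R 13 + R 3) (R 14) (R 15))
        + (R 8 - chkE (R 0) (R 6) (R 7) (R 12) (R 13) (R 14 + R 10) (R 15 + R 5)).
Proof.
let t := eval vm_compute in (run prog 83 (Config 14 R)) in
match t with Some (Config 11 ?F) => exists F end.
split; first by vm_compute.
repeat split.

Qed.

Definition Inv D lw uw lo uo Uw Uo (R : nat -> nat) :=
  [/\ R 0 = D, R 2 = lw, R 3 = uw, R 4 = lo &
  [/\ R 5 = uo, R 6 = Uw, R 7 = Uo, R 8 = 1 &
  [/\ R 9 = lwp lw, R 10 = lwp lo, R 12 = R 11 * lwp lw, R 13 = R 11 * uw &
  [/\ R 14 = R 11 * lwp lo, R 15 = R 11 * uo &
      R 16 = \sum_(a < R 11) inc D Uw Uo (lwp lw) uw (lwp lo) uo a]]]].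

Lemma exec_step P t c c' : step P c = Some c' -> exec P t.+1 c = exec P t c'.
Proof. by move=> /= ->. Qed.

Lemma loop D lw uw lo uo Uw Uo : forall k R, Inv D lw uw lo uo Uw Uo R -> R 11 + k = D.+1 ->
  exists cf, exec prog (k * 84 + 2) (Config 11 R) = Some cf /\
    regs cf 0 = \sum_(a < D.+1) inc D Uw Uo (lwp lw) uw (lwp lo) uo a
              + \sum_(a < D.+1) inc D Uw Uo (lwp lw) uw (lwp lo) uo a.
Proof.
elim=> [|k IH] R; rewrite /Inv => -[[h0 h2 h3 h4] [h5 h6 h7 h8] [h9 h10 h12 h13] [h14 h15 h16]] hk.
- have hlt : (R 11 <= R 0) = false by rewrite h0; lia.
  have e1 : step prog (Config 11 R) = Some (Config 12 R) by rewrite /step /= hlt.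
  rewrite mul0n add0n (exec_step _ e1).
  eexists; split; first reflexivity.
  rewrite /= /upd /= h16 -h0. by rewrite addn0 in hk; rewrite hk h0.
- have hle : (R 11 <= R 0) = true by rewrite h0; lia.
  have e1 : step prog (Config 14 R) = Some (Config 14 R) -> True by [].
  have e2 : step prog (Config 11 R) = Some (Config 14 R) by rewrite /step /= hle.
  have -> : k.+1 * 84 + 2 = (83 + (k * 84 + 2)).+1 by lia.
  rewrite (exec_step _ e2).
  have [R' [hrun [g0 [g2 [g3 [g4 [g5 [g6 [g7 [g8 [g9 [g10 [g11 [g12 [g13 [g14 [g15 g16]]]]]]]]]]]]]]]]] := body_run R.
  rewrite (run_exec _ hrun).
  apply: IH; last by rewrite g11 h8; lia.
  rewrite /Inv g11 h8 addn1.
  split; [congruence..|].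
  split; [congruence..|].
  split; [congruence|congruence|by rewrite g12 h12 h9 mulSnr|by rewrite g13 h13 h3 mulSnr|].
  split; [by rewrite g14 h14 h10 mulSnr|by rewrite g15 h15 h5 mulSnr|].
  rewrite g16 big_ord_recr /= -h16 h8 h0 h6 h7 h9 h3 h10 h5 h12 h13 h14 h15 /inc.
  lia.
Qed.

Lemma init_run D N lw uw lo uo Uw Uo : exists R0,
  run prog 11 (init [:: D; N; lw; uw; lo; uo; Uw; Uo]) = Some (Config 11 R0) /\
  R0 0 = D /\ R0 2 = lw /\ R0 3 = uw /\ R0 4 = lo /\ R0 5 = uo /\ R0 6 = Uw /\ R0 7 = Uo /\
  R0 8 = 1 /\ R0 9 = lwp lw /\ R0 10 = lwp lo /\ R0 11 = 0 /\ R0 12 = 0 /\ R0 13 = 0 /\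
  R0 14 = 0 /\ R0 15 = 0 /\ R0 16 = 0.
Proof.
let t := eval vm_compute in (run prog 11 (init [:: D; N; lw; uw; lo; uo; Uw; Uo])) in
match t with Some (Config 11 ?F) => exists F end.
split; first by vm_compute.
by repeat split.
Qed.

Theorem lemma3p1 :
  exists (P : program) (c k : nat),
    forall D N lw uw lo uo Uw Uo : nat,
      1 <= D -> 1 <= N ->
      exists cf : config,
        exec P (c * D ^ k + c) (init [:: D; N; lw; uw; lo; uo; Uw; Uo]) = Some cf /\
        (regs cf 0 <> 0 <->
         dodosp_feasible D N lw uw lo uo Uw Uo (fun _ => 0) (fun _ => N)).
Proof.
exists prog, 97, 1 => D N lw uw lo uo Uw Uo hD hN.
have [R0 [hrun [e0 [e2 [e3 [e4 [e5 [e6 [e7 [e8 [e9 [e10 [e11 [e12 [e13 [e14 [e15 e16]]]]]]]]]]]]]]]]] :=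
  init_run D N lw uw lo uo Uw Uo.
have hinv : Inv D lw uw lo uo Uw Uo R0.
  rewrite /Inv e11 big_ord0 !mul0n.
  split; [congruence..|]. split; [congruence..|]. split; [congruence..|]. split; congruence.
have hk : R0 11 + D.+1 = D.+1 by rewrite e11.
have [cf [hex hcf]] := @loop D lw uw lo uo Uw Uo D.+1 R0 hinv hk.
exists cf; split.
  apply: (@exec_mono _ (11 + (D.+1 * 84 + 2))); last by rewrite expn1; lia.
  by rewrite (run_exec _ hrun).
rewrite hcf feas_iff // arith_iff.
set S := \sum_(a < D.+1) _.
split.
- move=> h.
  have : S != 0 by apply/eqP; lia.
  rewrite /S sum_nat_eq0 => /forallPn [i hi].
  exists (nat_of_ord i); split; first exact: ltn_ord.
  by move: hi.
- case=> a [ha hinc].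
  rewrite /S (bigD1 (Ordinal ha)) //=.
  lia.
Qed.
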